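(* Let $R$ be a separative exchange ring in which $2$ is invertible, and let $a\in R$ be such that $a-a^3$ is regular in $R$. If $R(1-a^2)R=Rr(a)=\ell(a)R$, then $a$ is unit-regular.
   Context: All rings are associative with identity; modules are right modules. An element $x\in R$ is regular if $x=xyx$ for some $y\in R$, and unit-regular if $x=xux$ for some unit $u\in R$. $R$ is an exchange ring if for every $x\in R$ there is an idempotent $e\in xR$ with $1-e\in(1-x)R$. $R$ is separative if for all finitely generated projective right $R$-modules $A,B$: $A\oplus A\cong A\oplus B\cong B\oplus B$ implies $A\cong B$. For $a\in R$, $r(a)=\{x\in R: ax=0\}$ and $\ell(a)=\{x\in R: xa=0\}$; $Rr(a)$ and $\ell(a)R$ denote the (two-sided) ideals generated by these sets (sums of products), and $R(1-a^2)R$ the two-sided ideal generated by $1-a^2$. *)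

(* Defs.v *)
From HB Require Import structures.
From mathcomp Require Import all_boot all_order all_algebra.
Set Implicit Arguments. Unset Strict Implicit. Unset Printing Implicit Defensive.
Import GRing.Theory.
Local Open Scope ring_scope.

Definition is_unit (R : pzRingType) (u : R) : Prop :=
  exists v : R, u * v = 1 /\ v * u = 1.

Definition regular (R : pzRingType) (x : R) : Prop :=
  exists y : R, x = x * y * x.

Definition unit_regular (R : pzRingType) (x : R) : Prop :=
  exists u : R, is_unit u /\ x = x * u * x.

Definition exchange_ring (R : pzRingType) : Prop :=
  forall x : R, exists e : R,
    e * e = e /\ (exists s : R, e = x * s) /\ (exists t : R, 1 - e = (1 - x) * t).

(* Finitely generated projective right R-modules are represented, up to
   isomorphism, by idempotent square matrices E (the module E R^n of columns).
   Hom(E R^n, F R^m) = F M_{m,n} E, so E R^n ~ F R^m iff there are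
   X in F M_{m,n} E and Y in E M_{n,m} F with Y X = E and X Y = F. *)
Definition mx_idem (R : pzRingType) (n : nat) (E : 'M[R]_n) : Prop :=
  E *m E = E.

Definition fgp_iso (R : pzRingType) (n m : nat) (E : 'M[R]_n) (F : 'M[R]_m) : Prop :=
  exists (X : 'M[R]_(m, n)) (Y : 'M[R]_(n, m)),
    X = F *m X *m E /\ Y = E *m Y *m F /\ Y *m X = E /\ X *m Y = F.

Definition fgp_sum (R : pzRingType) (n m : nat) (E : 'M[R]_n) (F : 'M[R]_m)
  : 'M[R]_(n + m) := block_mx E 0 0 F.

Definition separative (R : pzRingType) : Prop :=
  forall (n m : nat) (E : 'M[R]_n) (F : 'M[R]_m),
    mx_idem E -> mx_idem F ->
    fgp_iso (fgp_sum E E) (fgp_sum E F) ->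
    fgp_iso (fgp_sum E F) (fgp_sum F F) ->
    fgp_iso E F.

Definition rann (R : pzRingType) (a : R) : R -> Prop := fun x => a * x = 0.
Definition lann (R : pzRingType) (a : R) : R -> Prop := fun x => x * a = 0.

Inductive ideal_gen (R : pzRingType) (S : R -> Prop) : R -> Prop :=
  | ig_base x : S x -> ideal_gen S x
  | ig_zero : ideal_gen S 0
  | ig_add x y : ideal_gen S x -> ideal_gen S y -> ideal_gen S (x + y)
  | ig_mull r x : ideal_gen S x -> ideal_gen S (r * x)
  | ig_mulr x r : ideal_gen S x -> ideal_gen S (x * r).

Definition same_ideal (R : pzRingType) (I J : R -> Prop) : Prop :=
  forall x, I x <-> J x.

(* Main.v *)
Require Import Defs.
From HB Require Import structures.
From mathcomp Require Import all_boot all_order all_algebra.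
From Stdlib Require Import Setoid Morphisms.
Set Implicit Arguments. Unset Strict Implicit. Unset Printing Implicit Defensive.
Import GRing.Theory.
Local Open Scope ring_scope.

Record obj (R : pzRingType) := Obj { osz : nat; omx : 'M[R]_osz; oidem : mx_idem omx }.

Definition oiso (R : pzRingType) (A B : obj R) := fgp_iso (omx A) (omx B).

Lemma idemL (R : pzRingType) n m (E : 'M[R]_n) (X : 'M[R]_(n,m)) (F : 'M[R]_m) :
  mx_idem E -> X = E *m X *m F -> E *m X = X.
Proof. move=> hE ->; by rewrite !mulmxA hE. Qed.
Lemma idemR (R : pzRingType) n m (E : 'M[R]_n) (X : 'M[R]_(n,m)) (F : 'M[R]_m) :
  mx_idem F -> X = E *m X *m F -> X *m F = X.
Proof. move=> hF ->; by rewrite -!mulmxA hF. Qed.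

Lemma oiso_refl (R : pzRingType) (A : obj R) : oiso A A.
Proof.
case: A => n E hE; exists E, E; rewrite /= !hE; by [].
Qed.

Lemma oiso_sym (R : pzRingType) (A B : obj R) : oiso A B -> oiso B A.
Proof. case=> X [Y [h1 [h2 [h3 h4]]]]; by exists Y, X. Qed.

Lemma oiso_trans (R : pzRingType) (A B C : obj R) : oiso A B -> oiso B C -> oiso A C.
Proof.
case: A B C => [n E hE] [m F hF] [k G hG]; rewrite /oiso /=.
move=> [X1 [Y1 [a1 [b1 [c1 d1]]]]] [X2 [Y2 [a2 [b2 [c2 d2]]]]].
exists (X2 *m X1), (Y1 *m Y2); split; last split; last split.
- rewrite !mulmxA (idemL hG a2) -mulmxA (idemR hE a1) //.
- rewrite !mulmxA (idemL hE b1) -mulmxA (idemR hG b2) //.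
- rewrite mulmxA -(mulmxA Y1) c2 (idemR hF b1) c1 //.
- rewrite mulmxA -(mulmxA X2) d1 (idemR hF a2) d2 //.
Qed.

Lemma sum_idem (R : pzRingType) n m (E : 'M[R]_n) (F : 'M[R]_m) :
  mx_idem E -> mx_idem F -> mx_idem (fgp_sum E F).
Proof.
move=> hE hF; rewrite /mx_idem /fgp_sum mulmx_block hE hF.
by rewrite !mulmx0 !mul0mx !addr0 !add0r.
Qed.

Definition oadd (R : pzRingType) (A B : obj R) : obj R :=
  Obj (sum_idem (oidem A) (oidem B)).

Lemma zero_idem (R : pzRingType) : mx_idem (0 : 'M[R]_0).
Proof. by rewrite /mx_idem mulmx0. Qed.
Definition ozero (R : pzRingType) : obj R := Obj (@zero_idem R).

Lemma oadd_congr (R : pzRingType) (A A' B B' : obj R) :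
  oiso A A' -> oiso B B' -> oiso (oadd A B) (oadd A' B').
Proof.
case: A A' B B' => [n1 E1 h1] [n2 E2 h2] [m1 F1 k1] [m2 F2 k2]; rewrite /oiso /=.
move=> [X1 [Y1 [a1 [b1 [c1 d1]]]]] [X2 [Y2 [a2 [b2 [c2 d2]]]]].
exists (block_mx X1 0 0 X2), (block_mx Y1 0 0 Y2); rewrite /fgp_sum.
rewrite !mulmx_block !mulmx0 !mul0mx !addr0 !add0r -a1 -a2 -b1 -b2 c1 c2 d1 d2.
by rewrite ?mul0mx ?mulmx0 ?addr0 ?add0r; do !split.
Qed.

Lemma oadd_comm (R : pzRingType) (A B : obj R) : oiso (oadd A B) (oadd B A).
Proof.
case: A B => [n E hE] [m F hF]; rewrite /oiso /=.
exists (block_mx 0 F E 0), (block_mx 0 E F 0); rewrite /fgp_sum.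
rewrite !mulmx_block !mulmx0 !mul0mx !addr0 !add0r hE hF.
by move: hE hF; rewrite /mx_idem => -> ->; rewrite !mul0mx; do !split.
Qed.

Lemma oiso_mx (R : pzRingType) n (E E' : 'M[R]_n) (hE : mx_idem E) (hE' : mx_idem E') :
  E = E' -> oiso (Obj hE) (Obj hE').
Proof. move=> eE; rewrite /oiso /=; subst E'; exact: (oiso_refl (Obj hE)). Qed.

Lemma oiso_cast (R : pzRingType) n n' (e : n = n') (E : 'M[R]_n) (hE : mx_idem E)
  (hE' : mx_idem (castmx (e, e) E)) : oiso (Obj hE) (Obj hE').
Proof. case: n' / e hE' => hE'; apply: oiso_mx; by rewrite castmx_id. Qed.

Lemma oadd_assoc (R : pzRingType) (A B C : obj R) :
  oiso (oadd (oadd A B) C) (oadd A (oadd B C)).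
Proof.
case: A B C => [n E hE] [m F hF] [k G hG].
have h : mx_idem (castmx (esym (addnA n m k), esym (addnA n m k))
            (fgp_sum (fgp_sum E F) G)).
  move: (sum_idem (sum_idem hE hF) hG); rewrite /mx_idem.
  case: (n + (m + k))%N / (esym (addnA n m k)) => H; by rewrite castmx_id.
apply: (oiso_trans (@oiso_cast R _ _ (esym (addnA n m k)) _ (sum_idem (sum_idem hE hF) hG) h)).
rewrite /oadd /=; apply: oiso_mx.
rewrite /fgp_sum.
have -> : (0 : 'M[R]_(n, m + k)) = row_mx 0 0 by rewrite row_mx0.
have -> : (0 : 'M[R]_(m + k, n)) = col_mx 0 0 by rewrite col_mx0.
rewrite block_mxA.
by rewrite row_mx0 col_mx0.
Qed.

Lemma oadd_zero (R : pzRingType) (A : obj R) : oiso (oadd A (ozero R)) A.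
Proof.
case: A => n E hE; rewrite /oiso /=.
move: hE; rewrite /mx_idem => hE.
exists (row_mx E 0), (col_mx E 0); rewrite /fgp_sum.
rewrite mul_mx_row mul_row_block mul_row_col mul_col_row !mulmx0 !mul0mx !addr0 hE.
rewrite mul_block_col mul_col_mx !mulmx0 !mul0mx !addr0 !hE; do !split.
by rewrite mul0mx.
Qed.

#[export] Instance oiso_Equiv (R : pzRingType) : Equivalence (@oiso R).
Proof. split; [exact: oiso_refl | exact: oiso_sym | exact: oiso_trans]. Qed.

#[export] Instance oadd_Proper (R : pzRingType) :
  Proper (@oiso R ==> @oiso R ==> @oiso R) (@oadd R).
Proof. move=> A A' hA B B' hB; exact: oadd_congr. Qed.

Fixpoint mulo (R : pzRingType) (k : nat) (A : obj R) : obj R :=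
  match k with 0 => ozero R | k'.+1 => oadd A (mulo k' A) end.

Lemma zero_add (R : pzRingType) (A : obj R) : oiso (oadd (ozero R) A) A.
Proof. rewrite oadd_comm; exact: oadd_zero. Qed.

Lemma mulo_add (R : pzRingType) (A : obj R) m n :
  oiso (mulo (m + n) A) (oadd (mulo m A) (mulo n A)).
Proof.
elim: m => [|m IH] /=; first by rewrite zero_add; reflexivity.
by rewrite IH oadd_assoc; reflexivity.
Qed.

Lemma ac1 (R : pzRingType) (x y z : obj R) : oiso (oadd (oadd x y) z) (oadd y (oadd x z)).
Proof. by rewrite (oadd_comm x y) oadd_assoc; reflexivity. Qed.

Lemma ac2 (R : pzRingType) (x y z w : obj R) :
  oiso (oadd (oadd x y) (oadd z w)) (oadd (oadd x z) (oadd y w)).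
Proof.
rewrite oadd_assoc -(oadd_assoc y z w) (oadd_comm y z) (oadd_assoc z y w).
rewrite -oadd_assoc; reflexivity.
Qed.

Lemma sep_obj (R : pzRingType) (A B : obj R) : separative R ->
  oiso (oadd A A) (oadd A B) -> oiso (oadd A B) (oadd B B) -> oiso A B.
Proof. case: A B => [n E hE] [m F hF] sep; exact: sep. Qed.

Lemma Kstep (R : pzRingType) (sep : separative R) (a b : obj R) j :
  oiso (mulo j.+3 a) (oadd b (mulo j.+2 a)) ->
  oiso (mulo j.+2 a) (oadd b (mulo j.+1 a)).
Proof.
move=> K.
have eX : oiso (oadd (mulo j.+2 a) (mulo j.+2 a)) (oadd (mulo j.+3 a) (mulo j.+1 a)).
  rewrite -!mulo_add; have -> : (j.+2 + j.+2 = j.+3 + j.+1)%N by rewrite !addnS !addSn.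
  reflexivity.
have eY : oiso (oadd (mulo j.+2 a) (mulo j.+1 a)) (oadd (mulo j.+3 a) (mulo j a)).
  rewrite -!mulo_add; have -> : (j.+2 + j.+1 = j.+3 + j)%N by rewrite !addnS !addSn.
  reflexivity.
apply: sep_obj => //.
- rewrite eX K ac1; reflexivity.
- rewrite (oadd_comm (mulo j.+2 a)) oadd_assoc (oadd_comm (mulo j.+1 a)) eY K.
  rewrite (oadd_assoc b (mulo j.+2 a)) -oadd_assoc -mulo_add.
  have -> : (j.+2 + j = j.+1 + j.+1)%N by rewrite !addnS !addSn.
  rewrite mulo_add ac2; reflexivity.
Qed.

Lemma Kdown (R : pzRingType) (sep : separative R) (a b : obj R) k :
  oiso (mulo k.+2 a) (oadd b (mulo k.+1 a)) -> oiso (oadd a a) (oadd b a).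
Proof.
elim: k => [|k IH] K.
- by rewrite /= !oadd_zero in K.
- exact: IH (Kstep sep K).
Qed.

Lemma cancel_main (R : pzRingType) (sep : separative R) (a b c d d' : obj R) N M :
  oiso (oadd a c) (oadd b c) -> oiso (oadd c d) (mulo N a) ->
  oiso (oadd c d') (mulo M b) -> oiso a b.
Proof.
move=> H Ha Hb.
have K1 : forall (x y : obj R) dd NN, oiso (oadd x c) (oadd y c) ->
    oiso (oadd c dd) (mulo NN x) -> oiso (oadd x x) (oadd y x).
  move=> x y dd NN Hxy Hx; apply: (@Kdown R sep x y NN).
  rewrite /= -Hx.
  transitivity (oadd x (oadd (oadd y c) dd)).
    rewrite -Hxy oadd_assoc; reflexivity.
  rewrite oadd_assoc -oadd_assoc (oadd_comm x y) oadd_assoc; reflexivity.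
apply: sep_obj => //.
- rewrite (K1 a b d N H Ha) oadd_comm; reflexivity.
- symmetry; exact: (K1 b a d' M (symmetry H) Hb).
Qed.

Lemma sc_inj (R : pzRingType) (x y : R) : (x%:M : 'M[R]_1) = y%:M -> x = y.
Proof. move/(congr1 (fun M : 'M[R]_1 => M 0 0)); by rewrite !mxE. Qed.

Lemma scB (R : pzRingType) (x y : R) : ((x - y)%:M : 'M[R]_1) = x%:M - y%:M.
Proof. exact: raddfB. Qed.

Lemma ob1_idem (R : pzRingType) (e : R) : e * e = e -> mx_idem (e%:M : 'M[R]_1).
Proof. by move=> he; rewrite /mx_idem -scalar_mxM he. Qed.

Definition ob1 (R : pzRingType) (e : R) (he : e * e = e) : obj R := Obj (ob1_idem he).

Lemma iso1E (R : pzRingType) (e f : R) (he : e * e = e) (hf : f * f = f) :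
  oiso (ob1 he) (ob1 hf) ->
  exists x y, x = f * x * e /\ y = e * y * f /\ y * x = e /\ x * y = f.
Proof.
rewrite /oiso /= => -[X [Y [h1 [h2 [h3 h4]]]]].
exists (X 0 0), (Y 0 0).
rewrite [X]mx11_scalar [Y]mx11_scalar -!scalar_mxM in h1 h2 h3 h4.
by rewrite -(sc_inj h1) -(sc_inj h2) (sc_inj h3) (sc_inj h4).
Qed.

Lemma iso1I (R : pzRingType) (e f : R) (he : e * e = e) (hf : f * f = f) x y :
  x = f * x * e -> y = e * y * f -> y * x = e -> x * y = f ->
  oiso (ob1 he) (ob1 hf).
Proof.
move=> h1 h2 h3 h4; rewrite /oiso /=.
exists x%:M, y%:M; rewrite -!scalar_mxM -h1 -h2 h3 h4; by do !split.
Qed.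

Lemma decomp_mx (R : pzRingType) N (K P : 'M[R]_N) (hK : mx_idem K) (hP : mx_idem P)
  (hKP : mx_idem (K - P)) :
  P *m K = P -> K *m P = P -> oiso (Obj hK) (oadd (Obj hP) (Obj hKP)).
Proof.
move=> PK KP; rewrite /oiso /=.
move: hK hP; rewrite /mx_idem => hK hP.
have e1 : (K - P) *m P = 0 by rewrite mulmxBl KP hP subrr.
have e2 : P *m (K - P) = 0 by rewrite mulmxBr PK hP subrr.
have e3 : (K - P) *m K = K - P by rewrite mulmxBl hK PK.
have e4 : K *m (K - P) = K - P by rewrite mulmxBr hK KP.
move: hKP; rewrite /mx_idem => hKP.
exists (col_mx P (K - P)), (row_mx P (K - P)); rewrite /fgp_sum.
split; [|split; [|split]].
- rewrite mul_block_col mul_col_mx ?mulmx0 ?mul0mx ?addr0 ?add0r hP hKP PK e3 //.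
- rewrite mul_mx_row mul_row_block ?mulmx0 ?mul0mx ?addr0 ?add0r KP e4 hP hKP //.
- rewrite mul_row_col hP hKP addrC subrK //.
- rewrite mul_col_row hP hKP e1 e2 //.
Qed.

Lemma ideal_rep (R : pzRingType) (S : R -> Prop) (E : R) (hE : E * E = E) :
  (forall x, S x -> exists r s, x = r * E * s) ->
  forall z, ideal_gen S z -> exists (k : obj R) n, oiso k (mulo n (ob1 hE)) /\
    exists (u : 'M_(1, osz k)) (v : 'M_(osz k, 1)), (z%:M : 'M_1) = u *m omx k *m v.
Proof.
move=> hS z; elim => {z}.
- move=> x /hS [r [s ->]]; exists (ob1 hE), 1%N; split.
    by rewrite /= oadd_zero; reflexivity.
  by exists r%:M, s%:M; rewrite /= -!scalar_mxM.
- exists (ozero R), 0%N; split; first reflexivity.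
  by exists 0, 0; rewrite /= mulmx0 raddf0.
- move=> x y _ [k1 [n1 [i1 [u1 [v1 e1]]]]] _ [k2 [n2 [i2 [u2 [v2 e2]]]]].
  exists (oadd k1 k2), (n1 + n2)%N; split.
    by rewrite mulo_add i1 i2; reflexivity.
  exists (row_mx u1 u2), (col_mx v1 v2); rewrite /= /fgp_sum mul_row_block.
  by rewrite ?mulmx0 ?mul0mx ?addr0 ?add0r mul_row_col -e1 -e2 (raddfD (@scalar_mx R 1)).
- move=> r x _ [k [n [i [u [v e]]]]]; exists k, n; split => //.
  by exists (r%:M *m u), v; rewrite scalar_mxM e !mulmxA.
- move=> x r _ [k [n [i [u [v e]]]]]; exists k, n; split => //.
  by exists u, (v *m r%:M); rewrite scalar_mxM e !mulmxA.
Qed.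

Lemma split_sum (R : pzRingType) (k : obj R) (p : R) (hp : p * p = p)
  (u : 'M_(1, osz k)) (v : 'M_(osz k, 1)) :
  (p%:M : 'M_1) = u *m omx k *m v -> exists D : obj R, oiso k (oadd (ob1 hp) D).
Proof.
case: k u v => N K hK u v /= huKv.
move: (hK); rewrite /mx_idem => hK'.
set P : 'M_1 := p%:M in huKv *.
have hP : P *m P = P by rewrite -scalar_mxM hp.
have hPl : forall m (X : 'M_(m, 1)), X *m P *m P = X *m P by move=> m X; rewrite -mulmxA hP.
have hKl : forall m (X : 'M_(m, N)), X *m K *m K = X *m K by move=> m X; rewrite -mulmxA hK'.
have hul : forall m (X : 'M_(m, 1)), X *m u *m K *m v = X *m P.
  by move=> m X; rewrite huKv !mulmxA.
set pi := K *m v *m P *m u *m K.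
have hpi : pi *m pi = pi.
  by rewrite /pi !mulmxA !hKl hul !hPl.
have piK : pi *m K = pi by rewrite /pi hKl.
have Kpi : K *m pi = pi by rewrite /pi !mulmxA hK'.
have hKp : mx_idem (K - pi).
  by rewrite /mx_idem mulmxBl !mulmxBr hK' piK Kpi hpi subrr subr0.
have hpi' : mx_idem pi by [].
exists (Obj hKp).
apply: (oiso_trans (decomp_mx hK hpi' hKp piK Kpi)).
apply: oadd_congr; last reflexivity.
rewrite /oiso /=.
exists (P *m u *m K), (K *m v *m P); split; [|split; [|split]].
- by rewrite /pi !mulmxA hP !hKl hul !hPl hP.
- by rewrite /pi !mulmxA !hKl hul !hPl.
- by rewrite /pi !mulmxA hPl.
- by rewrite !mulmxA hKl hul hPl hP.
Qed.

Lemma decomp1 (R : pzRingType) (p e : R) (hp : p * p = p) (he : e * e = e)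
  (hpe : (p - e) * (p - e) = p - e) :
  e * p = e -> p * e = e -> oiso (ob1 hp) (oadd (ob1 he) (ob1 hpe)).
Proof.
move=> ep pe.
have hKP : mx_idem ((p%:M : 'M[R]_1) - e%:M).
  by rewrite -scB; exact: ob1_idem.
apply: (oiso_trans (@decomp_mx R 1 p%:M e%:M (ob1_idem hp) (ob1_idem he) hKP _ _)).
- by rewrite -scalar_mxM ep.
- by rewrite -scalar_mxM pe.
apply: oadd_congr; first exact: oiso_refl.
by apply: oiso_mx; rewrite scB.
Qed.

Lemma lc (R : pzRingType) (x y z : R) : x * y = z -> forall r, r * x * y = r * z.
Proof. by move=> h r; rewrite -mulrA h. Qed.

Lemma stepAB (R : pzRingType) (a q y : R) :
  q = 1 - a * a -> (a * q) * y * (a * q) = a * q ->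
  let z := 1 + a * y * (a * a) in q * z * q = q.
Proof.
move=> hq hb z.
have aq : a * q = q * a by rewrite hq mulrBl mulrBr mul1r mulr1 mulrA.
have e1 : q * a * y * a * a * q = a * q * a.
  have -> : q * a * y * a * a * q = (a * q) * y * (a * q) * a.
    by rewrite -aq !mulrA -(mulrA _ a q) aq !mulrA.
  by rewrite hb.
rewrite /z mulrDr mulr1 mulrDl !mulrA e1.
have aa : a * a = 1 - q by rewrite hq opprB addrC subrK.
have -> : a * q * a = (1 - q) * q by rewrite -mulrA -aq mulrA aa.
by rewrite -mulrDl addrC subrK mul1r.
Qed.

Lemma stepB (R : pzRingType) (a q z p h : R) :
  a * q = q * a -> a * a = 1 - q -> q * z * q = q -> p = q * z -> h = 1 - p ->
  [/\ p * p = p, h * a * p = 0, h * a * a = h & h * a * h * a * h = h].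
Proof.
move=> aq aa qzq ep eh.
have pp : p * p = p by rewrite ep mulrA qzq.
have pq : p * q = q by rewrite ep qzq.
have hq : h * q = 0 by rewrite eh mulrBl mul1r pq subrr.
have ap : a * p = p * a * p.
  rewrite ep mulrA aq.
  have -> : q * z * a * (q * z) = (q * z * (a * q)) * z by rewrite !mulrA.
  by rewrite aq !mulrA qzq.
have hap : h * a * p = 0 by rewrite eh !mulrBl !mul1r -ap subrr.
have haa : h * a * a = h by rewrite -mulrA aa mulrBr mulr1 hq subr0.
have hh : h * h = h by rewrite {2}eh mulrBr mulr1 eh mulrBl mul1r pp subrr subr0.
split => //.
have -> : h * a * h * a * h = h * a * (1 - p) * a * h by rewrite -eh.
rewrite mulrBr mulr1 mulrBl haa mulrBl hh.
have -> : h * a * p * a * h = (h * a * p) * a * h by [].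
by rewrite hap !mul0r subr0.
Qed.

Lemma corner (R : pzRingType) (p h : R) : p * p = p -> h = 1 - p ->
  [/\ h * h = h, h * p = 0, p * h = 0 & h + p = 1].
Proof.
move=> pp eh; rewrite eh; split.
- by rewrite mulrBr mulr1 mulrBl mul1r pp subrr subr0.
- by rewrite mulrBl mul1r pp subrr.
- by rewrite mulrBr mulr1 pp subrr.
- by rewrite subrK.
Qed.

Lemma stepC (R : pzRingType) (a q y : R) :
  a * q = q * a -> a * a = 1 - q -> (a * q) * y * (a * q) = a * q ->
  a * (a + q * y * q) * a = a.
Proof.
move=> aq aa hb.
rewrite mulrDr mulrDl aa.
have -> : a * (q * y * q) * a = (a * q) * y * (a * q) by rewrite !mulrA -(mulrA _ q a) -aq !mulrA.
by rewrite hb mulrBl mul1r -aq subrK.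
Qed.

Lemma decompA (R : pzRingType) (a p h : R) : h + p = 1 ->
  a = h * a * h + h * a * p + (p * a * h + p * a * p).
Proof.
move=> hp; transitivity ((h + p) * a * (h + p)); first by rewrite hp mul1r mulr1.
by rewrite !mulrDl !mulrDr.
Qed.

Lemma stepD (R : pzRingType) (a p h x : R) :
  p * p = p -> h * h = h -> h * p = 0 -> p * h = 0 -> h + p = 1 ->
  h * a * p = 0 -> h * a * h * a * h = h -> a * x * a = a ->
  exists y1, [/\ p * y1 = y1, y1 * p = y1 & (p * a * p) * y1 * (p * a * p) = p * a * p].
Proof.
move=> pp hh hp ph hp1 hap hal hx.
set g := p * a * h; set al := h * a * h; set d := p * a * p.
have Fa : al * a = h.
  rewrite -[al * a]mulr1 -hp1 mulrDr hal.
  have -> : al * a * p = (h * a) * (h * a * p) by rewrite /al !mulrA.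
  by rewrite hap mulr0 addr0.
have Fag : al * g = 0.
  have -> : al * g = h * a * (h * p) * a * h by rewrite /al /g !mulrA.
  by rewrite hp mulr0 !mul0r.
have gh : g * h = g by rewrite /g -mulrA hh.
have F7 : (1 - g * al) * a = a - g.
  by rewrite mulrBl mul1r -mulrA Fa gh.
have F6 : (1 + g * al) * (1 - g * al) = 1.
  rewrite mulrDl mul1r mulrBr mulr1.
  have -> : g * al * (g * al) = g * (al * g) * al by rewrite !mulrA.
  by rewrite Fag mulr0 mul0r subr0 subrK.
have E1 : p * (a - g) = d.
  have pg : p * g = g by rewrite /g !mulrA pp.
  rewrite mulrBr pg /d /g.
  have -> : p * a * p = p * a * (1 - h) by rewrite -hp1 (addrC h p) addrK.
  by rewrite mulrBr mulr1.
have E2 : (a - g) * p = d.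
  have gp : g * p = 0 by rewrite /g -mulrA hp mulr0.
  rewrite mulrBl gp subr0.
  rewrite -{1}[a]mul1r -hp1 mulrDl mulrDl hap add0r //.
have Hc : (a - g) * (x * (1 + g * al)) * (a - g) = a - g.
  rewrite -F7.
  have -> : (1 - g * al) * a * (x * (1 + g * al)) * ((1 - g * al) * a)
      = (1 - g * al) * (a * x * ((1 + g * al) * (1 - g * al)) * a) by rewrite !mulrA.
  by rewrite F6 mulr1 hx.
exists (p * (x * (1 + g * al)) * p); split.
- by rewrite !mulrA pp.
- by rewrite -mulrA pp.
- have dp : d * p = d by rewrite /d -mulrA pp.
  have pd : p * d = d by rewrite /d !mulrA pp.
  have -> : d * (p * (x * (1 + g * al)) * p) * d
      = (d * p) * (x * (1 + g * al)) * (p * d) by rewrite !mulrA.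
  rewrite dp pd -{1}E1 -E2.
  have -> : p * (a - g) * (x * (1 + g * al)) * ((a - g) * p)
      = p * ((a - g) * (x * (1 + g * al)) * (a - g)) * p by rewrite !mulrA.
  by rewrite Hc E1 dp.
Qed.

Lemma rann_rep (R : pzRingType) (a p h y' z : R) :
  p * p = p -> h * h = h -> h * p = 0 -> p * h = 0 -> h + p = 1 ->
  h * a * p = 0 -> h * a * h * a * h = h -> a * z = 0 ->
  z = (p - y' * (p * a * p)) * z.
Proof.
move=> pp hh hp ph hp1 hap hal az.
have zs : z = h * z + p * z by rewrite -mulrDl hp1 mul1r.
have e1 : h * a * h * z = 0.
  have : h * (a * z) = 0 by rewrite az mulr0.
  rewrite {1}zs !mulrDr !mulrA hap mul0r addr0 //.
have hz : h * z = 0.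
  rewrite -{1}hal.
  have -> : h * a * h * a * h * z = (h * a) * (h * a * h * z) by rewrite !mulrA.
  by rewrite e1 mulr0.
have pz : p * z = z by rewrite {2}zs hz add0r.
have dz : p * a * p * z = 0 by rewrite -mulrA pz -mulrA az mulr0.
by rewrite mulrBl pz -(mulrA y') dz mulr0 subr0.
Qed.

Lemma lann_rep (R : pzRingType) (a p h y' x : R) :
  p * p = p -> h * h = h -> h * p = 0 -> p * h = 0 -> h + p = 1 ->
  h * a * p = 0 -> h * a * h * a * h = h -> x * a = 0 ->
  x = x * (p - (p * a * p) * y') * (1 - a * h * (h * a * h)).
Proof.
move=> pp hh hp ph hp1 hap hal xa.
have xs : x = x * h + x * p by rewrite -mulrDr hp1 mulr1.
have hapL : forall r, r * h * a * p = 0.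
  by move=> r; rewrite -!mulrA (mulrA h a p) hap mulr0.
have xd : x * (p * a * p) = 0.
  have xap : x * a * p = 0 by rewrite xa mul0r.
  have e : x * a * p = x * h * a * p + x * p * a * p by rewrite {1}xs !mulrDl.
  by rewrite !mulrA -xap e hapL add0r.
have xF : x * (p - p * a * p * y') = x * p.
  by rewrite mulrBr mulrA xd mul0r subr0.
rewrite xF.
have xpah : x * p * a * h = - (x * (h * a * h)).
  have -> : x * p = x - x * h by rewrite {2}xs addrC addKr.
  by rewrite mulrBl mulrBl xa mul0r sub0r !mulrA.
rewrite mulrBr mulr1 !mulrA xpah.
rewrite !mulNr opprK.
have -> : x * (h * a * h) * h * a * h = x * (h * a * h * a * h) by rewrite !mulrA -(mulrA _ h h) hh.
by rewrite hal {1}xs addrC.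
Qed.

Lemma final_unit (R : pzRingType) (a p h y' s s' : R) :
  p * p = p -> h * h = h -> h * p = 0 -> p * h = 0 -> h + p = 1 ->
  h * a * p = 0 -> h * a * h * a * h = h ->
  p * y' = y' -> y' * p = y' ->
  (p * a * p) * y' * (p * a * p) = p * a * p -> y' * (p * a * p) * y' = y' ->
  s = (p - p * a * p * y') * s * (p - y' * (p * a * p)) ->
  s' = (p - y' * (p * a * p)) * s' * (p - p * a * p * y') ->
  s' * s = p - y' * (p * a * p) -> s * s' = p - p * a * p * y' ->
  unit_regular a.
Proof.
move=> pp hh hp ph hp1 hap hal py yp dyd ydy hs hs' s's ss'.
set d := p * a * p in dyd ydy hs hs' s's ss' *.
set E := p - y' * d in hs hs' s's.
set F := p - d * y' in hs hs' ss'.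
set al := h * a * h; set g := p * a * h.
set w := y' + s'; set w' := d + s.
have pd : p * d = d by rewrite /d !mulrA pp.
have dp : d * p = d by rewrite /d -mulrA pp.
have pE : p * E = E by rewrite /E mulrBr pp mulrA py.
have Ep : E * p = E by rewrite /E mulrBl pp -mulrA dp.
have pF : p * F = F by rewrite /F mulrBr pp mulrA pd.
have Fp : F * p = F by rewrite /F mulrBl pp -mulrA yp.
have ps : p * s = s by rewrite hs !mulrA pF.
have sp : s * p = s by rewrite hs -mulrA Ep.
have ps' : p * s' = s' by rewrite hs' !mulrA pE.
have s'p : s' * p = s' by rewrite hs' -mulrA Fp.
have pw : p * w = w by rewrite /w mulrDr py ps'.
have wp : w * p = w by rewrite /w mulrDl yp s'p.
have pw' : p * w' = w' by rewrite /w' mulrDr pd ps.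
have w'p : w' * p = w' by rewrite /w' mulrDl dp sp.
have yF : y' * F = 0 by rewrite /F mulrBr yp mulrA ydy subrr.
have Fd : F * d = 0 by rewrite /F mulrBl pd dyd subrr.
have dE : d * E = 0 by rewrite /E mulrBr dp mulrA dyd subrr.
have Ey : E * y' = 0 by rewrite /E mulrBl py ydy subrr.
have ys : y' * s = 0 by rewrite hs !mulrA yF !mul0r.
have s'd : s' * d = 0 by rewrite hs' -mulrA Fd mulr0.
have ds' : d * s' = 0 by rewrite hs' !mulrA dE !mul0r.
have sy : s * y' = 0 by rewrite hs -mulrA Ey mulr0.
have ww' : w * w' = p.
  rewrite /w /w' !mulrDl !mulrDr ys s'd s's addr0 add0r /E addrC subrK //.
have w'w : w' * w = p.
  rewrite /w /w' !mulrDl !mulrDr ds' sy ss' addr0 add0r /F addrC subrK //.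
have dwd : d * w * d = d.
  by rewrite /w mulrDr mulrDl ds' mul0r addr0 dyd.
have ha : h * al = al by rewrite /al !mulrA hh.
have ah : al * h = al by rewrite /al -mulrA hh.
have aa : al * al = h by rewrite /al !mulrA -(mulrA _ h h) hh.
have hw : h * w = 0 by rewrite -pw mulrA hp mul0r.
have wh : w * h = 0 by rewrite -wp -mulrA ph mulr0.
have hw' : h * w' = 0 by rewrite -pw' mulrA hp mul0r.
have w'h : w' * h = 0 by rewrite -w'p -mulrA ph mulr0.
have alw : al * w = 0 by rewrite -ah -mulrA hw mulr0.
have walpha : w * al = 0 by rewrite -ha mulrA wh mul0r.
have alw' : al * w' = 0 by rewrite -ah -mulrA hw' mulr0.
have w'al : w' * al = 0 by rewrite -ha mulrA w'h mul0r.
clearbody w w'.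
have U1 : (al + w) * (al + w') = 1.
  by rewrite !mulrDl !mulrDr aa alw' walpha ww' addr0 add0r hp1.
have U2 : (al + w') * (al + w) = 1.
  by rewrite !mulrDl !mulrDr aa alw w'al w'w addr0 add0r hp1.
have alg : al * g = 0.
  have -> : al * g = h * a * (h * p) * a * h by rewrite /al /g !mulrA.
  by rewrite hp mulr0 !mul0r.
have V1 : (1 - g * al) * (1 + g * al) = 1.
  rewrite mulrBl mul1r mulrDr mulr1.
  have -> : g * al * (g * al) = g * (al * g) * al by rewrite !mulrA.
  by rewrite alg mulr0 mul0r addr0 addrK.
have V2 : (1 + g * al) * (1 - g * al) = 1.
  rewrite mulrDl mul1r mulrBr mulr1.
  have -> : g * al * (g * al) = g * (al * g) * al by rewrite !mulrA.
  by rewrite alg mulr0 mul0r subr0 subrK.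
exists ((al + w) * (1 - g * al)); split.
  exists ((1 + g * al) * (al + w')); split.
  - have -> : (al + w) * (1 - g * al) * ((1 + g * al) * (al + w'))
        = (al + w) * ((1 - g * al) * (1 + g * al)) * (al + w') by rewrite !mulrA.
    by rewrite V1 mulr1 U1.
  - have -> : (1 + g * al) * (al + w') * ((al + w) * (1 - g * al))
        = (1 + g * al) * ((al + w') * (al + w)) * (1 - g * al) by rewrite !mulrA.
    by rewrite U2 mulr1 V2.
have dec : a = al + g + d.
  rewrite {1}(decompA a hp1) hap addr0 addrA //.
have Fa : al * a = h.
  rewrite -[al * a]mulr1 -hp1 mulrDr.
  have -> : al * a * h = h * a * h * a * h by rewrite /al ?mulrA.
  have -> : al * a * p = (h * a) * (h * a * p) by rewrite /al ?mulrA.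
  by rewrite hal hap mulr0 addr0.
have gh : g * h = g by rewrite /g -mulrA hh.
have F7 : (1 - g * al) * a = al + d.
  by rewrite mulrBl mul1r -mulrA Fa gh {1}dec (addrAC al g d) addrK.
have ald : al * d = 0.
  have -> : al * d = h * a * (h * p) * a * p by rewrite /al /d !mulrA.
  by rewrite hp mulr0 !mul0r.
have wd : (al + w) * (al + d) = h + w * d.
  by rewrite !mulrDl !mulrDr aa ald walpha addr0 add0r.
have ah' : a * h = al + g.
  rewrite -{1}[a]mul1r -hp1 mulrDl mulrDl //.
have awd : a * (w * d) = d.
  rewrite -pw -{1}[a]mul1r -hp1 !mulrDl.
  have -> : h * a * (p * w * d) = (h * a * p) * w * d by rewrite !mulrA.
  have -> : p * a * (p * w * d) = d * w * d by rewrite !mulrA.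
  by rewrite hap !mul0r add0r dwd.
have -> : a * ((al + w) * (1 - g * al)) * a = a * ((al + w) * ((1 - g * al) * a)).
  by rewrite !mulrA.
by rewrite F7 wd mulrDr ah' awd dec.
Qed.

Unset Implicit Arguments.

Theorem theorem2p3 (R : pzRingType) (a : R) :
  separative R -> exchange_ring R -> is_unit (2%:R : R) ->
  regular (a - a ^+ 3) ->
  same_ideal (ideal_gen (fun x : R => x = 1 - a ^+ 2)) (ideal_gen (rann a)) ->
  same_ideal (ideal_gen (rann a)) (ideal_gen (lann a)) ->
  unit_regular a.
Proof.
move=> sep _ _ [y hy] hI1 hI2.
have [q eq0] : {q | q = 1 - a ^+ 2} by exists (1 - a ^+ 2).
have aa : a * a = 1 - q by rewrite eq0 opprB addrC subrK expr2.
have eq : q = 1 - a * a by rewrite eq0 expr2.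
have aq : a * q = q * a by rewrite eq mulrBl mulrBr mul1r mulr1 mulrA.
have eb : a - a ^+ 3 = a * q by rewrite eq mulrBr mulr1 exprS expr2.
have hb : (a * q) * y * (a * q) = a * q by rewrite -eb -hy.
have qzq0 := stepAB eq hb.
have [z ez] : {z | z = 1 + a * y * (a * a)} by exists (1 + a * y * (a * a)).
have qzq : q * z * q = q by rewrite ez.
have [p ep] : {p | p = q * z} by exists (q * z).
have [h eh] : {h | h = 1 - p} by exists (1 - p).
have [pp hap haa hal] := stepB aq aa qzq ep eh.
have [hh hp ph hp1] := corner pp eh.
have hx := stepC aq aa hb.
have [y1 [py1 y1p dy1d]] := stepD pp hh hp ph hp1 hap hal hx.
have [d ed] : {d | d = p * a * p} by exists (p * a * p).
rewrite -ed in dy1d.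
have [y' ey'] : {y' | y' = y1 * d * y1} by exists (y1 * d * y1).
have py : p * y' = y' by rewrite ey' !mulrA py1.
have yp : y' * p = y' by rewrite ey' -mulrA y1p.
have dyd : d * y' * d = d.
  rewrite ey'.
  have -> : d * (y1 * d * y1) * d = (d * y1 * d) * y1 * d by rewrite !mulrA.
  by rewrite dy1d dy1d.
have ydy : y' * d * y' = y'.
  rewrite ey'.
  have -> : y1 * d * y1 * d * (y1 * d * y1) = y1 * (d * y1 * d) * (y1 * d * y1) by rewrite !mulrA.
  rewrite dy1d.
  have -> : y1 * d * (y1 * d * y1) = y1 * (d * y1 * d) * y1 by rewrite !mulrA.
  by rewrite dy1d.
have dp : d * p = d by rewrite ed -mulrA pp.
have pd : p * d = d by rewrite ed !mulrA pp.
have [e1 ee1] : {e1 | e1 = y' * d} by exists (y' * d).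
have [f1 ef1] : {f1 | f1 = d * y'} by exists (d * y').
have he1 : e1 * e1 = e1 by rewrite ee1 mulrA ydy.
have hf1 : f1 * f1 = f1 by rewrite ef1 mulrA dyd.
have e1p : e1 * p = e1 by rewrite ee1 -mulrA dp.
have pe1 : p * e1 = e1 by rewrite ee1 mulrA py.
have f1p : f1 * p = f1 by rewrite ef1 -mulrA yp.
have pf1 : p * f1 = f1 by rewrite ef1 mulrA pd.
have hE : (p - e1) * (p - e1) = p - e1.
  by rewrite mulrBl !mulrBr pp pe1 e1p he1 subrr subr0.
have hF : (p - f1) * (p - f1) = p - f1.
  by rewrite mulrBl !mulrBr pp pf1 f1p hf1 subrr subr0.
have I1 := decomp1 pp he1 hE e1p pe1.
have I3 := decomp1 pp hf1 hF f1p pf1.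
have I2 : oiso (ob1 he1) (ob1 hf1).
  apply: (@iso1I R e1 f1 he1 hf1 d y').
  - by rewrite ef1 ee1 !mulrA dyd dyd.
  - by rewrite ee1 ef1 !mulrA ydy ydy.
  - by rewrite ee1.
  - by rewrite ef1.
have qI1 : ideal_gen (rann a) q by apply/hI1; apply: ig_base.
have qI2 : ideal_gen (lann a) q by apply/hI2.
have hS1 : forall x, rann a x -> exists r s, x = r * (p - e1) * s.
  move=> x ax; exists 1, x; rewrite mul1r ee1 ed.
  exact: (rann_rep y' pp hh hp ph hp1 hap hal ax).
have hS2 : forall x, lann a x -> exists r s, x = r * (p - f1) * s.
  move=> x xa; exists x, (1 - a * h * (h * a * h)); rewrite ef1 ed.
  exact: (lann_rep y' pp hh hp ph hp1 hap hal xa).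
have [k [n [ik [u [v euv]]]]] := ideal_rep hE hS1 qI1.
have [k' [m [ik' [u' [v' euv']]]]] := ideal_rep hF hS2 qI2.
have [D iD] : exists D, oiso k (oadd (ob1 pp) D).
  apply: (@split_sum R k p pp u (v *m z%:M)).
  by rewrite ep scalar_mxM euv mulmxA.
have [D' iD'] : exists D, oiso k' (oadd (ob1 pp) D).
  apply: (@split_sum R k' p pp u' (v' *m z%:M)).
  by rewrite ep scalar_mxM euv' mulmxA.
have Ha : oiso (oadd (ob1 he1) (oadd (ob1 hE) D)) (mulo n (ob1 hE)).
  by rewrite -ik iD I1 oadd_assoc; reflexivity.
have Hb : oiso (oadd (ob1 he1) (oadd (ob1 hF) D')) (mulo m (ob1 hF)).
  by rewrite -ik' iD' I3 I2 oadd_assoc; reflexivity.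
have H : oiso (oadd (ob1 hE) (ob1 he1)) (oadd (ob1 hF) (ob1 he1)).
  rewrite oadd_comm -I1 I3 -I2 oadd_comm; reflexivity.
have HEF := cancel_main sep H Ha Hb.
have [s [s' [hs [hs' [s's ss']]]]] := iso1E HEF.
rewrite ee1 ef1 ed in hs hs' s's ss'.
rewrite ed in dyd ydy.
exact: (final_unit pp hh hp ph hp1 hap hal py yp dyd ydy hs hs' s's ss').
Qed.
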